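(* Let $n\geq 6$ and $k\in\{3,\dots,n-3\}$. Every $k$-spectrally monomorphic $n$-tournament is transitive.
   Context: An $n$-tournament is a digraph on $n$ vertices in which every pair of distinct vertices is joined by exactly one arc. Its adjacency matrix $A=(a_{ij})$ (w.r.t. an ordering $v_1,\dots,v_n$) has $a_{ij}=1$ if $v_i$ dominates $v_j$ and $0$ otherwise. A tournament is $k$-spectrally monomorphic if all the $k\times k$ principal submatrices of its adjacency matrix have the same characteristic polynomial. A tournament is transitive if whenever $u$ dominates $v$ and $v$ dominates $w$, then $u$ dominates $w$. *)

(* Defs.v *)
From mathcomp Require Import all_boot all_order all_algebra.
Set Implicit Arguments. Unset Strict Implicit. Unset Printing Implicit Defensive.
Import GRing.Theory.
Local Open Scope ring_scope.

Definition is_tournament (n : nat) (dom : rel 'I_n) : Prop :=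
  (forall i, ~~ dom i i) /\
  (forall i j, i != j -> (dom i j (+) dom j i)).

Definition adj_mx (n : nat) (dom : rel 'I_n) : 'M[int]_n :=
  \matrix_(i, j) (dom i j)%:R.

(* The k x k principal submatrix of A on the rows/columns selected by
   the strictly increasing map f : 'I_k -> 'I_n (i.e. by a k-subset). *)
Definition principal_submx (n k : nat) (A : 'M[int]_n) (f : 'I_k -> 'I_n)
  : 'M[int]_k := mxsub f f A.

Definition strictly_increasing (n k : nat) (f : 'I_k -> 'I_n) : Prop :=
  forall a b : 'I_k, (a < b)%N -> (f a < f b)%N.

Definition k_spectrally_monomorphic (n k : nat) (dom : rel 'I_n) : Prop :=
  forall f g : 'I_k -> 'I_n, strictly_increasing f -> strictly_increasing g ->
    char_poly (principal_submx (adj_mx dom) f) =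
    char_poly (principal_submx (adj_mx dom) g).

Definition transitive_tournament (n : nat) (dom : rel 'I_n) : Prop :=
  forall u v w, dom u v -> dom v w -> dom u w.

(* Main.v *)
Require Import Defs.
From mathcomp Require Import all_boot all_order all_algebra.
From mathcomp Require Import algC mxred spectral.
From mathcomp Require Import ring zify.
From Stdlib Require Import Lia.
Set Implicit Arguments. Unset Strict Implicit. Unset Printing Implicit Defensive.
Import Order.TTheory GRing.Theory Num.Theory.

Section Helpers.
Section CountSuper.
Local Open Scope nat_scope.
Lemma count_super (T : finType) (Y M : {set T}) k : Y \subset M -> (#|Y| <= k)%N ->
  #|[set K : {set T} | (Y \subset K) && (K \subset M) && (#|K| == k)]| =
  'C(#|M| - #|Y|, k - #|Y|).
Proof.
move=> YM Yk; rewrite -cardsDS // -cards_draws.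
have inj : {in [set L : {set T} | L \subset M :\: Y & #|L| == k - #|Y|] &,
              injective (fun L => Y :|: L)}.
  move=> L1 L2; rewrite !inE => /andP[L1s _] /andP[L2s _] E.
  have H : forall L : {set T}, L \subset M :\: Y -> (Y :|: L) :\: Y = L.
    move=> L Ls; apply/setP => x; rewrite !inE.
    case xY: (x \in Y); case xL: (x \in L) => //=.
    by have := subsetP Ls x xL; rewrite !inE xY.
  by rewrite -(H _ L1s) E H.
rewrite -(card_in_imset inj); apply: eq_card => K; rewrite inE.
apply/idP/imsetP.
  case/andP => /andP[YK KM] /eqP cK.
  exists (K :\: Y); last first.
    apply/setP => x; rewrite !inE; case xY: (x \in Y) => //=.
    by rewrite (subsetP YK x xY).
  by rewrite inE setSD //= cardsDS // cK.
case=> L; rewrite inE => /andP[Ls /eqP cL] ->.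
have LM : L \subset M by apply: subset_trans Ls (subsetDl _ _).
have DL : (Y :|: L) :\: Y = L.
  apply/setP => x; rewrite !inE.
  case xY: (x \in Y); case xL: (x \in L) => //=.
  by have := subsetP Ls x xL; rewrite !inE xY.
have cU : #|Y :|: L| = (#|Y| + #|L|)%N.
  have := cardsDS (subsetUl Y L); rewrite DL => ->.
  by rewrite subnKC // subset_leq_card // subsetUl.
rewrite subsetUl /= subUset YM LM cU cL /=; apply/eqP; exact: subnKC.
Qed.

End CountSuper.

Section Rest.
Local Open Scope ring_scope.

Definition ct (R : nzRingType) n (M : 'M[R]_n) : R :=
  \sum_i \sum_j \sum_l M i j * M j l * M l i.

Lemma ctE (R : comNzRingType) n (M : 'M[R]_n) : ct M = \tr (M *m M *m M).
Proof.
rewrite /ct /mxtrace; apply: eq_bigr => i _.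
rewrite !mxE exchange_big /=; apply: eq_bigr => l _.
by rewrite !mxE big_distrl /=.
Qed.

Lemma char_poly_conj (F : fieldType) n (P A : 'M[F]_n) : P \in unitmx ->
  char_poly (P *m A *m invmx P) = char_poly A.
Proof.
move=> Pu; rewrite /char_poly.
have -> : char_poly_mx (P *m A *m invmx P) =
  map_mx polyC P *m char_poly_mx A *m map_mx polyC (invmx P).
  rewrite /char_poly_mx mulmxBr mulmxBl !map_mxM; congr (_ - _).
  by rewrite scalar_mxC mul_scalar_mx -scalemxAl -map_mxM mulmxV // map_mx1 scalemx1.
rewrite !det_mulmx !det_map_mx mulrC mulrA -rmorphM -det_mulmx.
by rewrite mulVmx // det1 rmorph1 mul1r.
Qed.

Lemma ct_conj (F : fieldType) n (P A : 'M[F]_n) : P \in unitmx ->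
  ct (P *m A *m invmx P) = ct A.
Proof.
move=> Pu; rewrite !ctE.
have E : forall B C : 'M[F]_n, (P *m B *m invmx P) *m (P *m C *m invmx P)
   = P *m (B *m C) *m invmx P.
  by move=> B C; rewrite -!mulmxA (mulmxA (invmx P)) mulVmx // mul1mx !mulmxA.
by rewrite !E mxtrace_mulC (mulmxA (invmx P)) mulVmx // mul1mx.
Qed.

Lemma ct_trig (R : comNzRingType) n (T : 'M[R]_n) : is_trig_mx T ->
  ct T = \sum_i T i i ^+ 3.
Proof.
move=> /is_trig_mxP Tt; rewrite /ct; apply: eq_bigr => i _.
rewrite (bigD1 i) //= [X in _ + X]big1 ?addr0; last first.
  move=> j ji; apply: big1 => l _.
  case: (ltngtP i j) => [lij|lji|eij].
  - by rewrite Tt // !mul0r.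
  - case: (ltngtP j l) => [ljl|llj|ejl].
    + by rewrite (Tt j l) // mulr0 mul0r.
    + by rewrite (Tt l i) ?mulr0 // (ltn_trans llj lji).
    + by rewrite (val_inj ejl) (Tt l i) ?mulr0 -?(val_inj ejl).
  - by move: ji; rewrite (val_inj eij) eqxx.
rewrite (bigD1 i) //= [X in _ + X]big1 ?addr0; last first.
  move=> l li; case: (ltngtP i l) => [lil|lli|eil].
  - by rewrite (Tt i l) // mulr0 mul0r.
  - by rewrite (Tt l i) // mulr0.
  - by move: li; rewrite (val_inj eil) eqxx.
by rewrite exprS expr2 mulrA.
Qed.

Lemma ct_char_C n (A B : 'M[algC]_n) : (0 < n)%N ->
  char_poly A = char_poly B -> ct A = ct B.
Proof.
move=> n0 eAB.
have key : forall M : 'M[algC]_n, exists s : seq algC,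
   char_poly M = \prod_(x <- s) ('X - x%:P) /\ ct M = \sum_(x <- s) x ^+ 3.
  move=> M; have [P Pu Pt] := Schur M n0.
  have Pun : P \in unitmx by apply: unitarymx_unit.
  move: Pt; rewrite /similar_to conjumx // => Tt.
  exists [seq (P *m M *m invmx P) i i | i <- enum 'I_n]; split.
    by rewrite -(char_poly_conj M Pun) (char_poly_trig Tt) big_map enumT.
  by rewrite -(ct_conj M Pun) (ct_trig Tt) big_map enumT.
have [s [cs ts]] := key A; have [t [ct' tt]] := key B.
rewrite ts tt; apply: perm_big; apply: prod_XsubC_eq.
by rewrite -cs -ct' eAB.
Qed.

Lemma ct_char_int n (A B : 'M[int]_n) : (0 < n)%N ->
  char_poly A = char_poly B -> ct A = ct B.
Proof.
move=> n0 eAB.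
have h : forall M : 'M[int]_n, ct (map_mx (intr : int -> algC) M) = (ct M)%:~R.
  move=> M; rewrite /ct rmorph_sum; apply: eq_bigr => i _.
  rewrite rmorph_sum; apply: eq_bigr => j _.
  rewrite rmorph_sum; apply: eq_bigr => l _.
  by rewrite !mxE !rmorphM.
apply: (@intr_inj algC); rewrite -!h; apply: ct_char_C => //.
by rewrite -!map_char_poly eAB.
Qed.


Definition tcyc n (dom : rel 'I_n) (a b c : 'I_n) : int :=
  (dom a b)%:R * (dom b c)%:R * (dom c a)%:R.
Definition cc n (dom : rel 'I_n) (X : {set 'I_n}) : int :=
  \sum_(a in X) \sum_(b in X) \sum_(c in X) tcyc dom a b c.
Definition PP n (dom : rel 'I_n) (x : 'I_n) (X : {set 'I_n}) : int :=
  \sum_(b in X) \sum_(c in X) tcyc dom x b c.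
Definition ss n (dom : rel 'I_n) (a b c : 'I_n) : int := tcyc dom a b c + tcyc dom a c b.

Lemma tt_cyc n (dom : rel 'I_n) a b c : tcyc dom a b c = tcyc dom b c a.
Proof. by rewrite /tcyc -mulrA mulrC. Qed.

Lemma tt_aa n (dom : rel 'I_n) (irr : forall i, ~~ dom i i) a c : tcyc dom a a c = 0.
Proof. by rewrite /tcyc (negPf (irr a)) !mul0r. Qed.

Lemma tt_bb n (dom : rel 'I_n) (irr : forall i, ~~ dom i i) a b : tcyc dom a b b = 0.
Proof. by rewrite /tcyc (negPf (irr b)) mulr0 mul0r. Qed.

Lemma tt_aba n (dom : rel 'I_n) (irr : forall i, ~~ dom i i) a b : tcyc dom a b a = 0.
Proof. by rewrite tt_cyc (tt_bb irr). Qed.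

Lemma cc_add1 n (dom : rel 'I_n) (x : 'I_n) (X : {set 'I_n}) : (forall i, ~~ dom i i) -> x \notin X ->
  cc dom (x |: X) = cc dom X + 3%:R * PP dom x X.
Proof.
move=> irr xX.
have HG : forall a, \sum_(b in x |: X) \sum_(c in x |: X) tcyc dom a b c =
   tcyc dom a x x + \sum_(c in X) tcyc dom a x c + \sum_(b in X) tcyc dom a b x
   + \sum_(b in X) \sum_(c in X) tcyc dom a b c.
  move=> a; rewrite big_setU1 // big_setU1 //=.
  under [X in _ + X = _]eq_bigr => b _ do rewrite big_setU1 //=.
  by rewrite big_split /= !addrA.
rewrite /cc /PP big_setU1 //= HG.
under eq_bigr => a _ do rewrite HG.
rewrite (tt_aa irr x x) add0r.
have -> : \sum_(c in X) tcyc dom x x c = 0 by apply: big1 => c _; exact: tt_aa.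
have -> : \sum_(b in X) tcyc dom x b x = 0 by apply: big1 => c _; exact: tt_aba.
rewrite !add0r !big_split /=.
have -> : \sum_(a in X) tcyc dom a x x = 0 by apply: big1 => c _; exact: tt_bb.
rewrite add0r.
have E1 : \sum_(a in X) \sum_(c in X) tcyc dom a x c = PP dom x X.
  rewrite /PP exchange_big /=; apply: eq_bigr => b _; apply: eq_bigr => c _.
  by rewrite tt_cyc.
have E2 : \sum_(a in X) \sum_(b in X) tcyc dom a b x = PP dom x X.
  rewrite /PP; apply: eq_bigr => b _; apply: eq_bigr => c _.
  by rewrite -tt_cyc.
rewrite E1 E2 -/(PP dom x X).
ring.
Qed.


Lemma sum_ind (T : finType) (K : {set T}) (F : T -> int) :
  \sum_(a in K) F a = \sum_a (a \in K)%:R * F a.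
Proof. by rewrite big_mkcond; apply: eq_bigr => a _; case: (a \in K); rewrite ?mul1r ?mul0r. Qed.

Lemma cc_ind n (dom : rel 'I_n) (K : {set 'I_n}) : cc dom K =
  \sum_a \sum_b \sum_c ((a \in K) && (b \in K) && (c \in K))%:R * tcyc dom a b c.
Proof.
rewrite /cc sum_ind; apply: eq_bigr => a _; rewrite sum_ind mulr_sumr.
apply: eq_bigr => b _; rewrite sum_ind !mulr_sumr; apply: eq_bigr => c _.
by case: (a \in K); case: (b \in K); case: (c \in K); rewrite ?mul1r ?mul0r.
Qed.

Lemma card3 (T : finType) (a b c : T) : a != b -> b != c -> c != a ->
  #|[set a; b; c]| = 3%N.
Proof.
move=> ab bc ca; rewrite -setUA cardsU1 cards2 bc !inE negb_or ab eq_sym ca.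
by [].
Qed.

Lemma avg n (dom : rel 'I_n) (irr : forall i, ~~ dom i i) k (M : {set 'I_n}) :
  (3 <= k)%N ->
  \sum_(K : {set 'I_n} | (K \subset M) && (#|K| == k)) cc dom K =
  ('C((#|M| - 3)%N, (k - 3)%N))%:R * cc dom M.
Proof.
move=> k3.
under eq_bigr => K _ do rewrite cc_ind.
rewrite cc_ind mulr_sumr exchange_big /=; apply: eq_bigr => a _.
rewrite mulr_sumr exchange_big /=; apply: eq_bigr => b _.
rewrite mulr_sumr exchange_big /=; apply: eq_bigr => c _.
rewrite -mulr_suml mulrA.
case Dab: (dom a b); last by rewrite /tcyc Dab /= !(mul0r, mulr0).
case Dbc: (dom b c); last by rewrite /tcyc Dbc /= !(mul0r, mulr0).
case Dca: (dom c a); last by rewrite /tcyc Dca /= !(mul0r, mulr0).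
congr (_ * _).
have ab : a != b by apply: contraTneq Dab => ->; rewrite (negPf (irr b)).
have bc : b != c by apply: contraTneq Dbc => ->; rewrite (negPf (irr c)).
have ca : c != a by apply: contraTneq Dca => ->; rewrite (negPf (irr a)).
have Y3 := card3 ab bc ca.
have -> : \sum_(K : {set 'I_n} | (K \subset M) && (#|K| == k))
     ((a \in K) && (b \in K) && (c \in K))%:R
   = (#|[set K : {set 'I_n} | ([set a; b; c] \subset K) && (K \subset M) && (#|K| == k)]|)%:R :> int.
  rewrite -sum1_card natr_sum /= big_mkcond [in RHS]big_mkcond /=.
  apply: eq_bigr => K _; rewrite !inE !subUset !sub1set.
  by case: (a \in K); case: (b \in K); case: (c \in K); case: (K \subset M); case: (#|K| == k).
case YM: ([set a; b; c] \subset M).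
  rewrite count_super // ?Y3 //; move: YM; rewrite !subUset !sub1set.
  by case: (a \in M); case: (b \in M); case: (c \in M); rewrite //= mulr1.
have -> : [set K : {set 'I_n} | ([set a; b; c] \subset K) && (K \subset M) && (#|K| == k)] = set0.
  apply/setP => K; rewrite !inE; apply/negP => /andP[/andP[YK KM] _].
  by move: YM; rewrite (subset_trans YK KM).
move: YM; rewrite !subUset !sub1set cards0.
by case: (a \in M); case: (b \in M); case: (c \in M); rewrite ?mulr0.
Qed.

Lemma level n (dom : rel 'I_n) (irr : forall i, ~~ dom i i) k (k3 : (3 <= k)%N)
  (kc : forall K K' : {set 'I_n}, #|K| = k -> #|K'| = k -> cc dom K = cc dom K')
  (M M' : {set 'I_n}) : #|M| = #|M'| -> (k <= #|M|)%N -> cc dom M = cc dom M'.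
Proof.
move=> eMM' kM.
have [K0 HK0] : exists K0 : {set 'I_n}, #|K0| = k.
  have : (0 < #|[set K : {set 'I_n} | K \subset M & #|K| == k]|)%N.
    by rewrite cards_draws bin_gt0.
  by case/card_gt0P => K; rewrite inE => /andP[_ /eqP]; exists K.
have H : forall N : {set 'I_n}, (k <= #|N|)%N ->
    ('C((#|N| - 3)%N, (k - 3)%N))%:R * cc dom N = ('C(#|N|, k))%:R * cc dom K0.
  move=> N kN; rewrite -avg //.
  transitivity (\sum_(K : {set 'I_n} | (K \subset N) && (#|K| == k)) cc dom K0).
    by apply: eq_bigr => K /andP[_ /eqP cK]; apply: kc.
  rewrite -cards_draws -sum1_card natr_sum mulr_suml.
  by apply: eq_big => [K|K _]; rewrite ?inE ?mul1r.
have := H M kM; rewrite eMM' -(H M'); last by rewrite -eMM'.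
move/mulfI; apply; rewrite pnatr_eq0 -lt0n bin_gt0.
by rewrite leq_sub2r // -eMM'.
Qed.

Lemma sum2_setU1 n (dom : rel 'I_n) (x : 'I_n) (X : {set 'I_n}) a : x \notin X ->
  \sum_(b in x |: X) \sum_(c in x |: X) tcyc dom a b c =
   tcyc dom a x x + \sum_(c in X) tcyc dom a x c + \sum_(b in X) tcyc dom a b x
   + \sum_(b in X) \sum_(c in X) tcyc dom a b c.
Proof.
move=> xX; rewrite big_setU1 // big_setU1 //=.
under [X in _ + X = _]eq_bigr => b _ do rewrite big_setU1 //=.
by rewrite big_split /= !addrA.
Qed.

Lemma PP_add1 n (dom : rel 'I_n) (irr : forall i, ~~ dom i i) (x z : 'I_n)
  (X : {set 'I_n}) : z \notin X ->
  PP dom x (z |: X) = PP dom x X + \sum_(c in X) ss dom x z c.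
Proof.
move=> zX; rewrite /PP sum2_setU1 // (tt_bb irr) add0r /ss big_split /=.
by rewrite [RHS]addrC.
Qed.

Lemma cardC_n n (A : {set 'I_n}) : #|~: A| = (n - #|A|)%N.
Proof. have := cardsC A; rewrite card_ord; lia. Qed.

Lemma S1 n (u v : 'I_n) : u != v -> ~: [set u] = v |: ~: [set u; v].
Proof.
move=> uv; apply/setP => x; rewrite !inE.
case: (eqVneq x v) => [->|xv] /=; first by rewrite eq_sym.
by rewrite orbF.
Qed.

Lemma S2 n (u v w : 'I_n) : w != u -> w != v -> ~: [set u; v] = w |: ~: [set u; v; w].
Proof.
move=> wu wv; apply/setP => x; rewrite !inE.
case: (eqVneq x w) => [->|xw] /=; first by rewrite (negPf wu) (negPf wv).
by rewrite orbF.
Qed.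

Lemma S3 n (u v w : 'I_n) : [set u; v; w] = [set u; w; v].
Proof. by apply/setP => x; rewrite !inE orbAC. Qed.

Lemma S4 n (u v w : 'I_n) : u != v -> u != w -> ~: [set v; w] = u |: ~: [set u; v; w].
Proof.
move=> uv uw; apply/setP => x; rewrite !inE.
case: (eqVneq x u) => [->|xu] /=; first by rewrite (negPf uv) (negPf uw).
by [].
Qed.

Lemma notin_C n (u : 'I_n) (A : {set 'I_n}) : u \in A -> u \notin ~: A.
Proof. by rewrite inE => ->. Qed.

Section Main.
Variables (n : nat) (dom : rel 'I_n) (k : nat).
Hypothesis irr : forall i, ~~ dom i i.
Hypothesis k3 : (3 <= k)%N.
Hypothesis kn : (k <= n - 3)%N.
Hypothesis kc : forall K K' : {set 'I_n}, #|K| = k -> #|K'| = k -> cc dom K = cc dom K'.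

Lemma lvl (A B : {set 'I_n}) : #|A| = #|B| -> (#|A| <= 3)%N -> cc dom (~: A) = cc dom (~: B).
Proof.
move=> eAB A3; apply: (level irr k3 kc); first by rewrite !cardC_n eAB.
by rewrite cardC_n (leq_trans kn) // leq_sub2l.
Qed.

Lemma three_inj (x y : int) : 3%:R * x = 3%:R * y -> x = y.
Proof. by move/mulfI; apply. Qed.

Lemma D1 u v u' v' : u != v -> u' != v' ->
  PP dom v (~: [set u; v]) = PP dom v' (~: [set u'; v']).
Proof.
move=> uv uv'; apply: three_inj.
have E : forall a b : 'I_n, a != b -> 3%:R * PP dom b (~: [set a; b]) =
   cc dom (~: [set a]) - cc dom (~: [set a; b]).
  move=> a b ab; rewrite (S1 ab) cc_add1 //; first by rewrite addrC addKr.
  by apply: notin_C; rewrite !inE eqxx orbT.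
rewrite (E _ _ uv) (E _ _ uv') (@lvl [set u] [set u']) ?cards1 //.
by rewrite (@lvl [set u; v] [set u'; v']) ?cards2 ?uv ?uv'.
Qed.

Lemma D2 u v w u' v' w' : u != v -> v != w -> w != u ->
  u' != v' -> v' != w' -> w' != u' ->
  PP dom w (~: [set u; v; w]) = PP dom w' (~: [set u'; v'; w']).
Proof.
move=> uv vw wu uv' vw' wu'; apply: three_inj.
have E : forall a b c : 'I_n, a != b -> b != c -> c != a ->
   3%:R * PP dom c (~: [set a; b; c]) =
   cc dom (~: [set a; b]) - cc dom (~: [set a; b; c]).
  move=> a b c ab bc ca; rewrite (S2 ca) ?cc_add1 //; first by rewrite addrC addKr.
  - by apply: notin_C; rewrite !inE eqxx orbT.
  - by rewrite eq_sym.
rewrite (E _ _ _ uv vw wu) (E _ _ _ uv' vw' wu').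
rewrite (@lvl [set u; v] [set u'; v']) ?cards2 ?uv ?uv' //.
by rewrite (@lvl [set u; v; w] [set u'; v'; w']) ?(card3 uv vw wu) ?(card3 uv' vw' wu').
Qed.

Lemma D3 u u' v w : v != w -> u != v -> u != w -> u' != v -> u' != w ->
  ss dom v w u = ss dom v w u'.
Proof.
move=> vw uv uw uv' uw'.
have E : forall a, a != v -> a != w ->
  ss dom v w a = \sum_(c in ~: [set v; w]) ss dom v w c
     - PP dom v (~: [set a; v]) + PP dom v (~: [set a; w; v]).
  move=> a av aw.
  rewrite (S4 av aw) big_setU1; last by apply: notin_C; rewrite !inE eqxx.
  rewrite (S2 (v := v) (u := a) (w := w)) ?PP_add1 //.
  - rewrite (S3 a w v) /=; ring.
  - by apply: notin_C; rewrite !inE eqxx !orbT.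
  - by rewrite eq_sym.
  - by rewrite eq_sym.
rewrite (E u uv uw) (E u' uv' uw') (D1 uv uv').
rewrite (@D2 u w v u' w v) //; by rewrite eq_sym.
Qed.

Lemma trans_main (tour : forall i j, i != j -> dom i j (+) dom j i) u v w :
  dom u v -> dom v w -> dom u w.
Proof.
have asym : forall a b, dom a b -> dom b a = false.
  move=> a b; case: (eqVneq a b) => [->|ab]; first by rewrite (negPf (irr b)).
  by move=> Dab; have := tour a b ab; rewrite Dab; case: (dom b a).
move=> Duv Dvw; case Duw: (dom u w) => //.
have uv : u != v by apply: contraTneq Duv => ->; rewrite (negPf (irr v)).
have vw : v != w by apply: contraTneq Dvw => ->; rewrite (negPf (irr w)).
have uw : u != w by apply: contraTneq Dvw => <-; rewrite asym.
have Dwu : dom w u by have := tour u w uw; rewrite Duw.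
have : (0 < #|~: [set u; v; w]|)%N by rewrite cardC_n (card3 uv vw) ?(eq_sym w) //; lia.
case/card_gt0P => z; rewrite !inE !negb_or => /andP[/andP[zu zv] zw].
have wv : w != v by rewrite eq_sym.
have wu : w != u by rewrite eq_sym.
have E1 := @D3 w z u v uv wu wv zu zv.
have E2 := @D3 u z v w vw uv uw zv zw.
move: (asym v z) (asym u z) (asym w z) E1 E2; rewrite /ss /tcyc Duv Dvw Dwu Duw (asym _ _ Duv) (asym _ _ Dvw) /=.
case: (dom v z); case: (dom z v); case: (dom z u); case: (dom u z);
  case: (dom w z); case: (dom z w) => //=; try by [move=> /(_ isT) | move=> _ /(_ isT) | move=> _ _ /(_ isT)].
Qed.

End Main.

End Rest.

Section Link.
Local Open Scope ring_scope.

Lemma inc_enum n (K : {set 'I_n}) : strictly_increasing (fun i : 'I_#|K| => enum_val i).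
Proof.
move=> a b ab.
have tr : transitive (relpre (val : 'I_n -> nat) ltn).
  by move=> x y z; apply: ltn_trans.
have srt : sorted (relpre (val : 'I_n -> nat) ltn) (enum K).
  have h : sorted ltn (map val (enum 'I_n)) by rewrite val_enum_ord iota_ltn_sorted.
  rewrite sorted_map in h.
  rewrite /enum_mem -enumT; exact: sorted_filter.
have := sorted_ltn_nth tr (enum_val a) srt.
move=> /(_ a b); rewrite !inE -cardE !ltn_ord => /(_ isT isT ab) /=.
by rewrite -!enum_val_nth.
Qed.

Lemma ct_sub n (dom : rel 'I_n) (K : {set 'I_n}) k : #|K| = k ->
  exists2 f : 'I_k -> 'I_n, strictly_increasing f &
    ct (principal_submx (adj_mx dom) f) = cc dom K.
Proof.
move=> HK; subst k; exists (fun i => enum_val i); first exact: inc_enum.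
rewrite /ct /cc [RHS]big_enum_val; apply: eq_bigr => i _.
rewrite [RHS]big_enum_val; apply: eq_bigr => j _.
rewrite [RHS]big_enum_val; apply: eq_bigr => l _.
by rewrite /principal_submx /tcyc !mxE.
Qed.

End Link.
End Helpers.

Theorem proposition3p1 (n k : nat) (dom : rel 'I_n) :
  (6 <= n)%N -> (3 <= k)%N -> (k <= n - 3)%N ->
  is_tournament dom -> k_spectrally_monomorphic k dom ->
  transitive_tournament dom.
Proof.
move=> n6 k3 kn [irr tour] mono u v w.
apply: (trans_main irr k3 kn _ tour).
move=> K K' HK HK'.
have [f fi ef] := ct_sub dom HK; have [g gi eg] := ct_sub dom HK'.
rewrite -ef -eg; apply: ct_char_int; first by rewrite (leq_trans _ k3).
exact: mono.
Qed.
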